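(* Let $f\in K$ and suppose that for every strictly increasing sequence $\mathbf a$ of positive integers, $f$ has finite order with respect to $A_{\mathbf a}$ (i.e. $A_{\mathbf a}^d f=f$ for some $d\ge1$). Then there exists a strictly increasing sequence $\mathbf b$ of positive integers such that $A_{\mathbf b}f$ is quasi-symmetric.
   Context: $K$ is the ring of integer formal power series of bounded degree in $x_1,x_2,\dots$; $f\in K$ is quasi-symmetric if the coefficient of $x_{i_1}^{a_1}\cdots x_{i_k}^{a_k}$ equals that of $x_{j_1}^{a_1}\cdots x_{j_k}^{a_k}$ whenever $i_1<\dots<i_k$, $j_1<\dots<j_k$. For a strictly increasing sequence $\mathbf a=(1\le a_1<a_2<\cdots)$, $A_{\mathbf a}:K\to K$ is the algebra homomorphism substituting $x_{a_i}\mapsto x_i$ for all $i$ and every variable not of the form $x_{a_i}$ by $0$. *)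

(* Defs.v *)
From mathcomp Require Import all_boot all_order all_algebra.
Set Implicit Arguments. Unset Strict Implicit. Unset Printing Implicit Defensive.
Import GRing.Theory Num.Theory.

(* Variables x_1, x_2, ... are indexed by nat with x_{i+1} <-> index i.
   A monomial is an exponent vector  m : nat -> nat  (only finitely supported
   ones are genuine monomials). *)
Definition monomial := nat -> nat.
Definition series := monomial -> int.

Definition fin_supp (m : monomial) : Prop := exists N, forall i, N <= i -> m i = 0.

Definition inK (f : series) : Prop :=
  (forall m, ~ fin_supp m -> f m = 0%R) /\
  exists D, forall (m : monomial) N, (forall i, N <= i -> m i = 0) ->
     D < \sum_(i < N) m i -> f m = 0%R.

Definition strict_incr (a : nat -> nat) : Prop := forall i, a i < a i.+1.

(* pull a n : the monomial prod_i x_{a i}^{n i}  (a strictly increasing, so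
   a i >= i and j is in the range of a iff a i = j for some i <= j). *)
Definition pull (a : nat -> nat) (n : monomial) : monomial :=
  fun j => \sum_(i < j.+1) (if a i == j then n i else 0).

(* A_a : substitution x_{a_i} |-> x_i, other variables |-> 0.
   On coefficients: the coefficient of x^n in A_a f is the coefficient of
   prod_i x_{a_i}^{n_i} in f (monomials involving other variables die). *)
Definition A (a : nat -> nat) (f : series) : series := fun n => f (pull a n).

Definition mono k (idx : 'I_k -> nat) (e : 'I_k -> nat) : monomial :=
  fun x => \sum_(t < k) (if idx t == x then e t else 0).

Definition incr_idx k (idx : 'I_k -> nat) : Prop :=
  forall s t : 'I_k, (s < t)%N -> idx s < idx t.

Definition quasisym (f : series) : Prop :=
  forall k (e : 'I_k -> nat) (i j : 'I_k -> nat),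
    (forall t, 0 < e t) -> incr_idx i -> incr_idx j ->
    f (mono i e) = f (mono j e).

(* Main.v *)
Require Import Defs.
From mathcomp Require Import all_boot all_order all_algebra.
From mathcomp Require Import zify.
From Stdlib Require Import FunctionalExtensionality ClassicalEpsilon.
Set Implicit Arguments. Unset Strict Implicit. Unset Printing Implicit Defensive.

Lemma sum_pick N (F : nat -> nat) c :
  (forall u, u < N -> u != c -> F u = 0) -> c < N -> \sum_(u < N) F u = F c.
Proof.
move=> H cN.
rewrite (bigD1 (Ordinal cN)) //= big1 ?addn0 // => u /= Hu.
apply: H => //.
Qed.

Definition sh (m : nat) (n : monomial) : monomial :=
  fun j => if j < m then n j else if j == m then 0 else n j.-1.
Definition am (m : nat) : nat -> nat := fun i => if i < m then i else i.+1.

Lemma am_si m : strict_incr (am m).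
Proof. move=> i; rewrite /am; case: ifP; case: ifP; lia. Qed.

Lemma pull_am m : pull (am m) = sh m.
Proof.
apply: functional_extensionality => n.
apply: functional_extensionality => j; rewrite /pull /sh.
pose F := fun u => if am m u == j then n u else 0.
change (\sum_(u < j.+1) F u = if j < m then n j else if j == m then 0 else n j.-1).
rewrite /F /am; case: (ltnP j m) => Hjm.
- rewrite (@sum_pick _ F j) ?ltnSn /F /am //=; first by rewrite Hjm eqxx.
  move=> u _ /eqP Hu; rewrite /am; case: (ltnP u m) => Hum; case: eqP => // Heq; lia.
case: eqP => Hj.
- apply: big1 => u _; case: (ltnP u m) => Hum; case: eqP => // Heq; lia.
rewrite (@sum_pick _ F j.-1) /F /am; last lia.
  have -> : j.-1 < m = false by lia.
  have -> : j.-1.+1 = j by lia.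
  by rewrite eqxx.
move=> u _ /eqP Hu; rewrite /am; case: (ltnP u m) => Hum; case: eqP => // Heq; lia.
Qed.

Lemma iter_sh G m w j : iter G (sh m) w j =
  if j < m then w j else if j < m + G then 0 else w (j - G).
Proof.
elim: G j => [|G IH] j /=.
  by rewrite addn0 subn0; case: (j < m).
rewrite /sh !IH.
case: (ltnP j m) => Hjm //.
case: eqP => Hj. by have -> : j < m + G.+1 by lia.
have -> : j.-1 < m = false by lia.
case: ifP => H1; case: ifP => H2 //; try lia.
congr (w _); lia.
Qed.

Lemma iter_A d a (f : series) n : iter d (A a) f n = f (iter d (pull a) n).
Proof. elim: d n => [|d IH] n //=. by rewrite /A IH -iterSr. Qed.

Lemma si_mono b : strict_incr b -> forall i j, i < j -> b i < b j.
Proof.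
move=> Hb i j; elim: j => [|j IH] // Hij.
case: (ltnP i j) => H. have := IH H; have := Hb j; lia.
have -> : i = j by lia. exact: Hb.
Qed.

Lemma si_ge b : strict_incr b -> forall i, i <= b i.
Proof. move=> Hb; elim=> [|i IH] //; have := Hb i; lia. Qed.

Lemma mono_at k (idx : 'I_k -> nat) e t : injective idx -> mono idx e (idx t) = e t.
Proof.
move=> Hinj; rewrite /mono (bigD1 t) //= eqxx big1 ?addn0 // => s Hs.
by rewrite (inj_eq Hinj) (negbTE Hs).
Qed.

Lemma mono_out k (idx : 'I_k -> nat) e x : (forall t, idx t != x) -> mono idx e x = 0.
Proof. by move=> H; apply: big1 => t _; rewrite (negbTE (H t)). Qed.

Lemma mono_agree k (idx idx' : 'I_k -> nat) e x t :
  (forall s, s != t -> idx s = idx' s) -> idx t != x -> idx' t != x ->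
  mono idx e x = mono idx' e x.
Proof.
move=> H H1 H2; apply: eq_bigr => s _; case: (eqVneq s t) => [->|hs].
  by rewrite (negbTE H1) (negbTE H2).
by rewrite H.
Qed.

Lemma move (f : series) (n n' : monomial) c G :
 (forall x, f (iter G (sh c) x) = f x) -> (forall x, f (iter G (sh c.+1) x) = f x) ->
 (forall j, j < c -> n j = n' j) -> (forall j, c + G < j -> n j = n' j) ->
 n (c + G) = n' c -> (forall j, c <= j -> j < c + G -> n j = 0) ->
 (forall j, c < j -> j <= c + G -> n' j = 0) -> f n = f n'.
Proof.
move=> H1 H2 Hlo Hhi Hmid Hz Hz'.
pose w : monomial := fun j => if j < c.+1 then n' j else n' (j + G).
have -> : n = iter G (sh c) w.
  apply: functional_extensionality => j; rewrite iter_sh /w.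
  case: (ltnP j c) => Hjc.
    have -> : j < c.+1 by lia.
    by apply: Hlo.
  case: (ltnP j (c + G)) => HjG; first by apply: Hz.
  case: (ltnP (j - G) c.+1) => H3.
    have -> : j = c + G by lia.
    by rewrite Hmid; congr n'; lia.
  have -> : j - G + G = j by lia.
  apply: Hhi; lia.
have -> : n' = iter G (sh c.+1) w.
  apply: functional_extensionality => j; rewrite iter_sh /w.
  case: (ltnP j c.+1) => Hjc //.
  case: (ltnP j (c.+1 + G)) => HjG; first by apply: Hz'; lia.
  have -> : j - G < c.+1 = false by lia.
  congr n'; lia.
by rewrite H1 H2.
Qed.

Lemma idx_ge k (i : 'I_k -> nat) : incr_idx i -> forall t : 'I_k, t <= i t.
Proof.
move=> Hi [t Ht] /=; elim: t Ht => [|t IH] Ht //.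
have Ht' : t < k by lia.
have := Hi (Ordinal Ht') (Ordinal Ht) (ltnSn t); have := IH Ht'; simpl; lia.
Qed.

Lemma incr_inj k (b : nat -> nat) (i : 'I_k -> nat) :
  strict_incr b -> incr_idx i -> injective (fun s => b (i s)).
Proof.
move=> Hb Hi s s' /= E; apply: val_inj => /=.
case: (ltngtP s s') => // H.
  by have := si_mono Hb (Hi _ _ H); rewrite E ltnn.
by have := si_mono Hb (Hi _ _ H); rewrite E ltnn.
Qed.

Lemma pull_mono (b : nat -> nat) k (idx : 'I_k -> nat) e :
  strict_incr b -> pull b (mono idx e) = mono (fun t => b (idx t)) e.
Proof.
move=> Hb; apply: functional_extensionality => j; rewrite /pull /mono.
transitivity (\sum_(u < j.+1) \sum_(t < k) (if (b u == j) && (idx t == u) then e t else 0)).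
  apply: eq_bigr => u _; case: eqP => _ //=; by rewrite big1.
rewrite exchange_big; apply: eq_bigr => t _.
pose F := fun u => if (b u == j) && (idx t == u) then e t else 0.
change (\sum_(u < j.+1) F u = (if b (idx t) == j then e t else 0)).
case: (ltnP (idx t) j.+1) => H.
  rewrite (@sum_pick _ F (idx t)) /F ?eqxx ?andbT //.
  by move=> u _ Hu; rewrite [idx t == _]eq_sym (negbTE Hu) andbF.
rewrite big1 => [|u _].
  case: eqP => // E; have := si_ge Hb (idx t); lia.
rewrite /F; case: eqP => //= _; case: eqP => // E; have := ltn_ord u; lia.
Qed.

Lemma step (f : series) (b : nat -> nat) (Hb : strict_incr b)
 (Hinv : forall p, 0 < p ->
   (forall x, f (iter (b p - b p.-1) (sh (b p.-1)) x) = f x) /\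
   (forall x, f (iter (b p - b p.-1) (sh (b p.-1).+1) x) = f x))
 k (e : 'I_k -> nat) (i : 'I_k -> nat) : incr_idx i ->
 (forall t : 'I_k, i t = t) \/ exists i', [/\ incr_idx i', \sum_(t < k) i' t < \sum_(t < k) i t
    & f (mono (fun t => b (i t)) e) = f (mono (fun t => b (i' t)) e)].
Proof.
move=> Hi.
case: (boolP [exists t : 'I_k, t < i t]) => [/existsP [t0 Ht0] | /existsPn Hno]; last first.
  left => t; have := idx_ge Hi t; have := Hno t; rewrite -leqNgt; lia.
right.
pose q := fun s => [exists t : 'I_k, (val t == s) && (t < i t)].
have exq : exists s, q s by exists (val t0); apply/existsP; exists t0; rewrite eqxx.
case: (ex_minnP exq) => m /existsP [t /andP [/eqP Htm Ht]] Hmin.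
have Hlow : forall s : 'I_k, s < t -> i s = s.
  move=> s Hs; have := idx_ge Hi s; case: (ltnP s (i s)) => H1 H2; last lia.
  have : q s by apply/existsP; exists s; rewrite eqxx H1.
  have Htm2 : nat_of_ord t = m := Htm.
  move/Hmin; lia.
set p := i t.
have Hp : 0 < p by lia.
have bm := si_mono Hb.
have Hbpp : b p.-1 < b p by apply: bm; lia.
pose i' := fun s : 'I_k => if s == t then p.-1 else i s.
have Hi' : incr_idx i'.
  move=> s s' Hss'; rewrite /i'.
  case: (eqVneq s t) => [Est|Nst]; case: (eqVneq s' t) => [Es't|Ns't].
  - by rewrite Est Es't ltnn in Hss'.
  - subst s; have := Hi _ _ Hss'; rewrite -/p; lia.
  - subst s'; have := Hlow s Hss'; lia.
  - exact: Hi.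
exists i'; split => //.
  rewrite (bigD1 t) // [in X in _ < X](bigD1 t) //=.
  have -> : \sum_(s < k | s != t) i' s = \sum_(s < k | s != t) i s.
    by apply: eq_bigr => s Hs; rewrite /i' (negbTE Hs).
  rewrite /i' eqxx -/p ltn_add2r; lia.
have Hbp : b p.-1 + (b p - b p.-1) = b p by lia.
have [I1 I2] := Hinv p Hp.
have Hag : forall s, s != t -> b (i s) = b (i' s) by move=> s Hs; rewrite /i' (negbTE Hs).
have Hit : b (i t) = b p by [].
have Hi't : b (i' t) = b p.-1 by rewrite /i' eqxx.
apply: (@move f _ _ (b p.-1) (b p - b p.-1) I1 I2); rewrite ?Hbp.
- move=> j Hj; apply: (@mono_agree _ _ _ e j t) => //; apply/eqP; rewrite ?Hit ?Hi't; lia.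
- move=> j Hj; apply: (@mono_agree _ _ _ e j t) => //; apply/eqP; rewrite ?Hit ?Hi't; lia.
- rewrite -Hit -Hi't !mono_at //; exact: incr_inj.
- move=> j Hj1 Hj2; apply: mono_out => s; apply/eqP => E.
  case: (ltngtP s t) => H.
  + have := Hlow s H; have := bm (i s) p.-1; lia.
  + have := bm _ _ (Hi _ _ H); rewrite -/p; lia.
  + have Est : s = t by apply: val_inj.
    by subst s; rewrite Hit in E; lia.
- move=> j Hj1 Hj2; apply: mono_out => s; apply/eqP => E.
  case: (ltngtP s t) => H.
  + have Hs : s != t by rewrite neq_ltn H.
    rewrite -(Hag _ Hs) in E.
    have := Hlow s H; have := bm (i s) p.-1; lia.
  + have Hs : s != t by rewrite neq_ltn H orbT.
    rewrite -(Hag _ Hs) in E.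
    have := bm _ _ (Hi _ _ H); rewrite -/p; lia.
  + have Est : s = t by apply: val_inj.
    by subst s; rewrite Hi't in E; lia.
Qed.

Lemma main_ind (f : series) (b : nat -> nat) (Hb : strict_incr b)
 (Hinv : forall p, 0 < p ->
   (forall x, f (iter (b p - b p.-1) (sh (b p.-1)) x) = f x) /\
   (forall x, f (iter (b p - b p.-1) (sh (b p.-1).+1) x) = f x))
 k (e : 'I_k -> nat) :
 forall N (i : 'I_k -> nat), incr_idx i -> \sum_(t < k) i t <= N ->
 f (mono (fun t => b (i t)) e) = f (mono (fun t : 'I_k => b t) e).
Proof.
elim=> [|N IH] i Hi Hs; case: (step Hb Hinv e Hi) => [Hid | [i' [Hi' Hlt ->]]].
- have -> : (fun t => b (i t)) = (fun t : 'I_k => b t) by apply: functional_extensionality => t; rewrite Hid.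
  by [].
- lia.
- have -> : (fun t => b (i t)) = (fun t : 'I_k => b t) by apply: functional_extensionality => t; rewrite Hid.
  by [].
- apply: IH => //; lia.
Qed.

Fixpoint Qf (P : nat -> nat) M := if M is M'.+1 then Qf P M' * P M else P 0.
Fixpoint bf (P : nat -> nat) i := if i is i'.+1 then bf P i' + Qf P (bf P i').+1 else 0.

Lemma Q_dvd P m M : m <= M -> P m %| Qf P M.
Proof.
elim: M => [|M IH] HmM /=.
  by have -> : m = 0 by lia.
case: (eqVneq m M.+1) => [->|Hne]; first exact: dvdn_mull.
apply: dvdn_mulr; apply: IH; lia.
Qed.

Lemma Q_pos P M : (forall m, 0 < P m) -> 0 < Qf P M.
Proof. move=> H; elim: M => [|M IH] /=; first exact: H. by rewrite muln_gt0 IH H. Qed.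

Theorem lemma8p5 (f : series) :
  inK f ->
  (forall a : nat -> nat, strict_incr a ->
     exists d : nat, 0 < d /\ iter d (A a) f = f) ->
  exists b : nat -> nat, strict_incr b /\ quasisym (A b f).
Proof.
move=> _ H.
have [P HP] : exists P : nat -> nat, forall m, 0 < P m /\ iter (P m) (A (am m)) f = f.
  exists (fun m => proj1_sig (constructive_indefinite_description _ (H _ (am_si m)))).
  move=> m; exact: (proj2_sig (constructive_indefinite_description _ (H _ (am_si m)))).
have Hpos : forall m, 0 < P m by move=> m; case: (HP m).
have Hinv0 : forall m x, f (iter (P m) (sh m) x) = f x.
  move=> m x; have [_ E] := HP m.
  have := iter_A (P m) (am m) f x; rewrite E pull_am => ->; done.
have Hmul : forall m t x, f (iter (t * P m) (sh m) x) = f x.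
  move=> m; elim=> [|t IH] x //=.
  by rewrite mulSn iterD Hinv0 IH.
have Hdiv : forall m M x, m <= M -> f (iter (Qf P M) (sh m) x) = f x.
  move=> m M x HmM; rewrite -(divnK (Q_dvd P HmM)); exact: Hmul.
have Hb : strict_incr (bf P).
  move=> i; have -> : bf P i.+1 = bf P i + Qf P (bf P i).+1 by [].
  have := @Q_pos P (bf P i).+1 Hpos; lia.
exists (bf P); split => //.
have Hinv : forall p, 0 < p ->
   (forall x, f (iter (bf P p - bf P p.-1) (sh (bf P p.-1)) x) = f x) /\
   (forall x, f (iter (bf P p - bf P p.-1) (sh (bf P p.-1).+1) x) = f x).
  move=> p Hp.
  have -> : bf P p - bf P p.-1 = Qf P (bf P p.-1).+1.
    by case: p Hp => //= p _; lia.
  by split => x; apply: Hdiv.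
move=> k e i j _ Hi Hj; rewrite /A !pull_mono //.
by rewrite (@main_ind f _ Hb Hinv k e _ i Hi (leqnn _)) (@main_ind f _ Hb Hinv k e _ j Hj (leqnn _)).
Qed.
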